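(* Let $V=\{v_0,\dots,v_{L-1}\}$ be a set of $L\ge1$ boolean variables and let $n_0,\dots,n_t$ ($t\ge1$) be a sequence of nodes, node $n_j$ carrying a state $s_j:V\to\{0,1\}$ (distinct nodes may carry equal states). Let the child node be $n^c=n_t$ and let the parent node be $n^p=n_k$ for some $k\in\{0,\dots,t-1\}$, and suppose the states of $n^p$ and $n^c$ differ in exactly $e$ variables. For a node $n=n_m$ in the sequence, define $$\alpha_{0:t}(n)=\frac{1}{t}\sum_{i\in\{0,\dots,t\},\,i\neq m}\delta(n,n_i),\qquad \delta(n_m,n_i)=\frac{1}{L}\sum_{l=0}^{L-1}\mathbf{1}_{s_m(v_l)\neq s_i(v_l)}.$$ Then $$\alpha_{0:t}(n^p)-\frac{t-1}{t}\frac{e}{L}\le\alpha_{0:t}(n^c)\le\alpha_{0:t}(n^p)+\frac{t-1}{t}\frac{e}{L}.$$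
   Context: $\delta$ is the normalized Hamming distance between the states of two nodes; $\alpha_{0:t}(n)$ is the average normalized Hamming distance of a node of the sequence to all other nodes of the sequence. The $e$ variables on which parent and child differ are called the effects. *)

(* Defs.v *)
From mathcomp Require Import all_boot all_order all_algebra.
Set Implicit Arguments. Unset Strict Implicit. Unset Printing Implicit Defensive.
Import Order.TTheory GRing.Theory Num.Theory.
Local Open Scope ring_scope.

Definition state (L : nat) := {ffun 'I_L -> bool}.

Definition delta (R : realFieldType) (L : nat) (a b : state L) : R :=
  (#|[set l : 'I_L | a l != b l]|%:R) / L%:R.

Definition alpha (R : realFieldType) (L t : nat) (s : 'I_t.+1 -> state L)
    (m : 'I_t.+1) : R :=
  (\sum_(i < t.+1 | i != m) delta R (s m) (s i)) / t%:R.

(* Main.v *)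
Require Import Defs.
From mathcomp Require Import all_boot all_order all_algebra.
From mathcomp Require Import ring lra zify.
Import Order.TTheory GRing.Theory Num.Theory.
Local Open Scope ring_scope.

Lemma ham_tri L (a b c : state L) :
  (#|[set l | a l != c l]| <= #|[set l | a l != b l]| + #|[set l | b l != c l]|)%N.
Proof.
apply: leq_trans (leq_card_setU _ _).
apply: subset_leq_card; apply/subsetP => l; rewrite !inE.
by case: (a l); case: (b l); case: (c l).
Qed.

Lemma ham_sym L (a b : state L) :
  #|[set l | a l != b l]| = #|[set l | b l != a l]|.
Proof. by apply: eq_card => l; rewrite !inE eq_sym. Qed.

Lemma delta_tri (R : realFieldType) L (a b c : state L) :
  delta R a c <= delta R a b + delta R b c.
Proof.
rewrite /delta -mulrDl ler_wpM2r ?invr_ge0 ?ler0n // -natrD ler_nat.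
exact: ham_tri.
Qed.

Lemma delta_sym (R : realFieldType) L (a b : state L) :
  delta R a b = delta R b a.
Proof. by rewrite /delta ham_sym. Qed.

Theorem theorem4 (R : realFieldType) (L t : nat) (s : 'I_t.+1 -> state L)
    (k : 'I_t.+1) (e : nat) :
  (1 <= L)%N -> (1 <= t)%N -> (k < t)%N ->
  #|[set l : 'I_L | s k l != s ord_max l]| = e ->
  alpha R s k - (t%:R - 1) / t%:R * (e%:R / L%:R) <= alpha R s ord_max /\
  alpha R s ord_max <= alpha R s k + (t%:R - 1) / t%:R * (e%:R / L%:R).
Proof.
move=> hL ht hk he.
set c : 'I_t.+1 := ord_max.
have hkc : k != c by rewrite -(inj_eq val_inj) /= neq_ltn hk.
have hx : e%:R / L%:R = delta R (s k) (s c) by rewrite /delta he.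
rewrite hx.
set x := delta R (s k) (s c).
set P := fun i : 'I_t.+1 => (i != k) && (i != c).
have Sk : \sum_(i < t.+1 | i != k) delta R (s k) (s i) =
   x + \sum_(i < t.+1 | P i) delta R (s k) (s i).
  by rewrite (bigD1 c) 1?eq_sym //.
have Sc : \sum_(i < t.+1 | i != c) delta R (s c) (s i) =
   x + \sum_(i < t.+1 | P i) delta R (s c) (s i).
  rewrite (bigD1 k) //= delta_sym; congr (_ + _).
  by apply: eq_bigl => i; rewrite /P andbC.
have cardP : #|P| = t.-1.
  have -> : #|P| = #|~: [set k; c]|.
    by apply: eq_card => i; rewrite !inE /P negb_or.
  have := cardsC [set k; c]; rewrite cards2 hkc card_ord; lia.
have up : \sum_(i < t.+1 | P i) delta R (s c) (s i) <=
   \sum_(i < t.+1 | P i) delta R (s k) (s i) + x *+ t.-1.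
  rewrite -cardP -sumr_const -big_split /=; apply: ler_sum => i _.
  rewrite addrC /x (delta_sym R _ (s k)); exact: delta_tri.
have lo : \sum_(i < t.+1 | P i) delta R (s k) (s i) <=
   \sum_(i < t.+1 | P i) delta R (s c) (s i) + x *+ t.-1.
  rewrite -cardP -sumr_const -big_split /=; apply: ler_sum => i _.
  rewrite addrC /x; exact: delta_tri.
have tm1 : x *+ t.-1 = (t%:R - 1) * x.
  by rewrite -[x *+ _]mulr_natl -{2}(prednK ht) -natr1 addrK.
rewrite tm1 in up lo.
rewrite /alpha Sk Sc -/c.
have ti : 0 <= t%:R^-1 :> R by rewrite invr_ge0 ler0n.
move: up lo ti.
set A := \sum_(i < t.+1 | P i) delta R (s c) (s i).
set B := \sum_(i < t.+1 | P i) delta R (s k) (s i).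
set y := t%:R^-1.
move=> up lo ti.
have h1 : 0 <= (A + (t%:R - 1) * x - B) * y by apply: mulr_ge0 => //; rewrite subr_ge0.
have h2 : 0 <= (B + (t%:R - 1) * x - A) * y by apply: mulr_ge0 => //; rewrite subr_ge0.
split; lra.
Qed.
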